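(* Let $n\geq2$, let $q\in\mathbb{C}$ with $|q|>1$, fix $q^{1/2}$, and let $a_1,\ldots,a_n,b_1,\ldots,b_n$ be nonzero complex parameters with $\prod_{j=1}^n a_j=q^{(n-1)/2}$. Let $x_j(t),y_j(t)$ $(j=1,\ldots,n)$ be functions satisfying the system $q$-$P_{(n,n)}$: \[\begin{split} x_j(t)-x_{j-1}(t)&=\frac{a_jx_j(qt)}{1+x_j(qt)y_{j-1}(t)}-\frac{b_{j-1}x_{j-1}(qt)}{1+x_{j-1}(qt)y_{j-1}(t)},\\ y_j(qt)-y_{j-1}(qt)&=\frac{b_jy_j(t)}{1+x_j(qt)y_j(t)}-\frac{a_jy_{j-1}(t)}{1+x_j(qt)y_{j-1}(t)}, \end{split}\qquad (j=1,\ldots,n),\] where $b_0=q^{-1}b_n$, $x_0(t)=tx_n(t)$, $y_0(t)=q^{-1}t^{-1}y_n(t)$ (as functions of $t$), together with the relation \[ \prod_{j=1}^{n}a_j\frac{1+x_j(qt)y_j(t)}{1+x_j(qt)y_{j-1}(t)}=q^{(n-1)/2}, \] and suppose moreover that $y_j(t)=0$ for all $j=1,\ldots,n$. Then the vector $\mathbf{x}(t)={}^t[x_1(t),\ldots,x_n(t)]$ satisfies the linear $q$-difference system \[ \mathbf{x}(q^{-1}t)=\left(A_0+\frac{A_1}{1-q^{-1}t}\right)\mathbf{x}(t), \] where \[ A_0=\sum_{j=1}^{n}b_jE_{j,j}+\sum_{i=1}^{n}\sum_{j=i+1}^{n}(b_j-a_j)E_{i,j},\qquad A_1=\sum_{i=1}^{n}\sum_{j=1}^{n}(a_j-b_j)E_{i,j}.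 \]
   Context: $E_{i,j}$ denotes the $n\times n$ matrix unit with $1$ in the $(i,j)$ entry and zeros elsewhere. All denominators are assumed nonzero. *)

(* Defs.v *)
From HB Require Import structures.
From mathcomp Require Import all_boot all_order all_algebra.
From mathcomp.real_closed Require Import complex.
From mathcomp Require Import reals.
Set Implicit Arguments. Unset Strict Implicit. Unset Printing Implicit Defensive.
Import Order.TTheory GRing.Theory Num.Theory.
Local Open Scope ring_scope.

(* Complex numbers are R[i] for R : realType. Indices j = 1..n are nat;
   index 0 is handled by the boundary conventions below. *)

Definition bext (C : fieldType) (n : nat) (q : C) (b : nat -> C) (j : nat) : C :=
  if j == 0%N then q^-1 * b n else b j.

Definition xext (C : fieldType) (n : nat) (x : nat -> C -> C) (j : nat) (t : C) : C :=
  if j == 0%N then t * x n t else x j t.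

Definition yext (C : fieldType) (n : nat) (q : C) (y : nat -> C -> C) (j : nat) (t : C) : C :=
  if j == 0%N then q^-1 * t^-1 * y n t else y j t.

(* The system q-P_(n,n) at the point t (equations for j = 1..n) together with
   the product relation; s is the fixed square root q^{1/2}. *)
Definition qPnn (C : fieldType) (n : nat) (q s : C) (a b : nat -> C)
    (x y : nat -> C -> C) (t : C) : Prop :=
  (forall j : nat, (1 <= j <= n)%N ->
     xext n x j t - xext n x j.-1 t =
       a j * x j (q * t) / (1 + x j (q * t) * yext n q y j.-1 t)
       - bext n q b j.-1 * xext n x j.-1 (q * t)
           / (1 + xext n x j.-1 (q * t) * yext n q y j.-1 t)) /\
  (forall j : nat, (1 <= j <= n)%N ->
     yext n q y j (q * t) - yext n q y j.-1 (q * t) =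
       b j * y j t / (1 + x j (q * t) * y j t)
       - a j * yext n q y j.-1 t / (1 + x j (q * t) * yext n q y j.-1 t)) /\
  \prod_(1 <= j < n.+1) (a j * ((1 + x j (q * t) * y j t)
                               / (1 + x j (q * t) * yext n q y j.-1 t)))
    = s ^+ n.-1.

(* E_{i,j} is delta_mx; matrix index i : 'I_n stands for i+1. *)
Definition A0 (C : fieldType) (n : nat) (a b : nat -> C) : 'M[C]_n :=
  \sum_(j < n) b j.+1 *: delta_mx j j
  + \sum_(i < n) \sum_(j < n | (i < j)%N) (b j.+1 - a j.+1) *: delta_mx i j.

Definition A1 (C : fieldType) (n : nat) (a b : nat -> C) : 'M[C]_n :=
  \sum_(i < n) \sum_(j < n) (a j.+1 - b j.+1) *: delta_mx i j.

Definition xvec (C : fieldType) (n : nat) (x : nat -> C -> C) (t : C) : 'cV[C]_n :=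
  \col_(i < n) x i.+1 t.

(* Main.v *)
Require Import Defs.
From HB Require Import structures.
From mathcomp Require Import all_boot all_order all_algebra.
From mathcomp.real_closed Require Import complex.
From mathcomp Require Import reals.
Import Order.TTheory GRing.Theory Num.Theory.
Local Open Scope ring_scope.
Local Open Scope complex_scope.
From mathcomp Require Import ring.
Lemma A0E (C : fieldType) n (a b : nat -> C) (i k : 'I_n) :
  A0 n a b i k = (if i == k then b k.+1 else 0)
               + (if (i < k)%N then b k.+1 - a k.+1 else 0).
Proof.
rewrite /A0 !mxE !(@summxE C n n); congr (_ + _).
  rewrite (bigD1 k) // !mxE eqxx andbT big1 ?addr0.
    by rewrite /= addr0; case: eqP => _; rewrite ?mulr1 ?mulr0.
  by move=> j /=; rewrite eq_sym => /negPf hj; rewrite !mxE hj andbF mulr0.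
rewrite (bigD1 i) // [X in _ + X = _]big1 ?addr0; last first.
  by move=> i' /negPf hi; rewrite (@summxE C n n) big1 // => j _; rewrite !mxE eq_sym hi /= mulr0.
rewrite (@summxE C n n).
case: ltnP => hik.
  rewrite (bigD1 k) // [X in _ + X = _]big1; last first.
    by move=> j /andP[_]; rewrite eq_sym => /negPf hj; rewrite !mxE hj andbF mulr0.
  by rewrite /= !mxE !eqxx mulr1 addr0.
rewrite big1 // => j hj; rewrite !mxE eqxx /=.
case: eqP => [ejk|]; last by rewrite mulr0.
by move: hj; rewrite -ejk ltnNge hik.
Qed.

Lemma A1E (C : fieldType) n (a b : nat -> C) (i k : 'I_n) :
  A1 n a b i k = a k.+1 - b k.+1.
Proof.
rewrite /A1 (@summxE C n n) (bigD1 i) // [X in _ + X = _]big1 ?addr0; last first.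
  by move=> i' /negPf hi; rewrite (@summxE C n n) big1 // => j _; rewrite !mxE eq_sym hi /= mulr0.
rewrite (@summxE C n n).
rewrite (bigD1 k) // [X in _ + X = _]big1; last first.
  by move=> j; rewrite eq_sym => /negPf hj; rewrite !mxE hj andbF mulr0.
by rewrite /= !mxE !eqxx mulr1 addr0.
Qed.
Lemma core (C : fieldType) (n : nat) (q : C) (a b : nat -> C) (x : nat -> C -> C) (t : C) :
  (1 <= n)%N -> q != 0 -> 1 - q^-1 * t != 0 ->
  (forall j, (1 <= j <= n)%N ->
     xext n x j (q^-1 * t) - xext n x j.-1 (q^-1 * t) =
       a j * x j t - bext n q b j.-1 * xext n x j.-1 t) ->
  xvec n x (q^-1 * t) = (A0 n a b + (1 - q^-1 * t)^-1 *: A1 n a b) *m xvec n x t.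
Proof.
case: n => [//|m] _ hq h1 Hx.
set t' := q^-1 * t.
pose V k := x k.+1 t.
pose U k := x k.+1 t'.
pose G i := \sum_(i <= k < m.+1) (b k.+1 - a k.+1) * V k.
have Grec : forall i, (i < m.+1)%N -> G i = (b i.+1 - a i.+1) * V i + G i.+1.
  by move=> i hi; rewrite /G big_ltn.
have Gn : G m.+1 = 0 by rewrite /G big_geq.
have rec : forall k, (k.+1 < m.+1)%N -> U k.+1 - U k = a k.+2 * V k.+1 - b k.+1 * V k.
  by move=> k hk; have := Hx k.+2; rewrite /xext /bext /= => ->.
have base : U 0%N - t' * U m = a 1%N * V 0%N - q^-1 * b m.+1 * (t * V m).
  by have := Hx 1%N; rewrite /xext /bext /= => ->.
have ind : forall i, (i < m.+1)%N ->
    U i = U 0%N + (a i.+1 * V i + G i) - (a 1%N * V 0%N + G 0%N).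
  elim=> [|i IH] hi; first by ring.
  have := rec i hi; rewrite IH ?(ltnW hi) // (Grec i (ltnW hi)) => e.
  apply/eqP; rewrite -subr_eq0; apply/eqP.
  have -> : U i.+1 - (U 0%N + (a i.+2 * V i.+1 + G i.+1) - (a 1%N * V 0%N + G 0%N))
    = (U i.+1 - (U 0%N + (a i.+1 * V i + ((b i.+1 - a i.+1) * V i + G i.+1))
         - (a 1%N * V 0%N + G 0%N))) - (a i.+2 * V i.+1 - b i.+1 * V i) by ring.
  by rewrite -e; ring.
have U0 : U 0%N = a 1%N * V 0%N + G 0%N - (1 - t')^-1 * G 0%N.
  have Um := ind m (ltnSn m).
  rewrite Grec // Gn addr0 in Um.
  apply/eqP; rewrite -subr_eq0; apply/eqP.
  have -> : U 0%N - (a 1%N * V 0%N + G 0%N - (1 - t')^-1 * G 0%N) =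
     (1 - t')^-1 * ((U 0%N - t' * U m) - (a 1%N * V 0%N - q^-1 * b m.+1 * (t * V m)))
     + (1 - t')^-1 * t' * (U m - (U 0%N + (a m.+1 * V m + ((b m.+1 - a m.+1) * V m))
         - (a 1%N * V 0%N + G 0%N))).
    rewrite /t'; field; rewrite hq /=.
    move: h1; apply: contra; rewrite subr_eq0 => /eqP <-; by rewrite mulVf // subrr.
  by rewrite base Um !subrr !mulr0 addr0.
apply/matrixP => i k; rewrite ord1 !mxE.
have key : forall (A B : 'M[C]_m.+1) j, (A + (1 - t')^-1 *: B) i j * xvec m.+1 x t j 0
    = (A i j + (1 - t')^-1 * B i j) * x j.+1 t by move=> A B j; rewrite !mxE.
under eq_bigr => j _ do rewrite key A0E A1E !mulrDl.
rewrite !big_split /=.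
have S1 : \sum_(j < m.+1) (if i == j then b j.+1 else 0) * x j.+1 t = b i.+1 * V i.
  rewrite (bigD1 i) // big1 /=; first by rewrite eqxx addr0.
  by move=> j; rewrite eq_sym => /negPf ->; rewrite mul0r.
have S2 : \sum_(j < m.+1) (if (i < j)%N then b j.+1 - a j.+1 else 0) * x j.+1 t = G i.+1.
  rewrite /G big_geq_mkord [RHS]big_mkcond /=; apply: eq_bigr => j _.
  by case: ifP; rewrite ?mul0r.
have S3 : \sum_(j < m.+1) (1 - t')^-1 * (a j.+1 - b j.+1) * x j.+1 t = - ((1 - t')^-1 * G 0%N).
  rewrite /G big_mkord mulr_sumr -sumrN; apply: eq_bigr => j _; rewrite /V; ring.
rewrite S1 S2 S3.
have := ind i (ltn_ord i); rewrite Grec // U0 /U => ->.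
rewrite /V; ring.
Qed.

Theorem mainTheorem3 (R : realType) (n : nat) (q s : R[i]) (a b : nat -> R[i])
    (x y : nat -> R[i] -> R[i]) :
  (2 <= n)%N ->
  1 < `|q| ->
  s ^+ 2 = q ->
  (forall j, (1 <= j <= n)%N -> a j != 0) ->
  (forall j, (1 <= j <= n)%N -> b j != 0) ->
  \prod_(1 <= j < n.+1) a j = s ^+ n.-1 ->
  (forall t : R[i], t != 0 -> qPnn n q s a b x y t) ->
  (forall j t, (1 <= j <= n)%N -> y j t = 0) ->
  forall t : R[i], t != 0 -> 1 - q^-1 * t != 0 ->
    xvec n x (q^-1 * t) = (A0 n a b + (1 - q^-1 * t)^-1 *: A1 n a b) *m xvec n x t.
Proof.
move=> hn hq _ _ _ _ HP Hy t ht h1.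
have q0 : q != 0.
  apply: contraTneq hq => ->; rewrite normr0 ltr10 //.
have n1 : (1 <= n)%N by apply: ltnW.
have Y0 : forall j u, (j <= n)%N -> yext n q y j u = 0.
  move=> j u jn; rewrite /yext; case: eqP => [_|/eqP j0].
    by rewrite Hy ?n1 ?leqnn // mulr0.
  by rewrite Hy // lt0n j0.
apply: core => //.
move=> j hj.
have t0 : q^-1 * t != 0 by rewrite mulf_neq0 ?invr_eq0.
have [H1 _] := HP _ t0.
have jn : (j.-1 <= n)%N by case/andP: hj => _; apply: leq_trans; apply: leq_pred.
rewrite H1 // !Y0 // !mulr0 !addr0 !divr1 mulrA mulfV // mul1r; reflexivity.
Qed.
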